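(* For every $V_{\sf P}\ge \tfrac13$, $$\lim_{\delta\to1}\lim_{p\to0}\frac{{\sf Util}({\sf PEAR})-{\sf Util}({\sf APP})}{{\sf Util}({\sf APP})}\ \ge\ \frac{1}{V_{\sf P}+1}.$$
   Context: Model. Time $t=0,1,2,\dots$, discount factor $\delta\in[0,1)$. Two item types, popular ${\sf P}$ and niche ${\sf N}$, infinitely many items each; at each time $t$ the platform recommends a set $\pi_t$ of two fresh items of chosen types. Utility of item $i$: $u_i=V_{\tau(i)}+\epsilon_i$; outside option: $u_\emptyset=\epsilon_\emptyset$; all noises i.i.d. Gumbel with scale $1$ and mean $0$. User chooses $c_t=\arg\max_{j\in\pi_t\cup\{\emptyset\}}u_j$. $V_{\sf P}$ is a known constant; $V_{\sf N}$ is drawn once, fixed over time, independent of noise, with $\mathbb P(V_{\sf N}=(1-p)/p)=p$, $\mathbb P(V_{\sf N}=-1)=1-p$, $p\in(0,1)$. ${\sf Util}(\pi)=\sum_{t\ge0}\delta^t\mathbb E[\max_{j\in\pi_t\cup\{\emptyset\}}u_j]$ (expectation also over $V_{\sf N}$). ${\sf APP}$ recommends two popular items at every time. Policy ${\sf PEAR}$: let $\rho_1=\frac{e^{(1-p)/p}}{1+e^{V_{\sf P}}+e^{(1-p)/p}}$, $\rho_2=\frac{e^{-1}}{1+e^{V_{\sf P}}+e^{-1}}$. Maintain counters $S,F$ (initially $0$) and $p_0=p$. At each time $t$: if $p_t\ge p$, recommend one popular and one niche item; if the niche item is chosen increment $S$, otherwise increment $F$. If $p_t<p$, recommend two popular items.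 Then set $p_{t+1}=\left(1+\frac{1-p}{p}\cdot\frac{\rho_2^S(1-\rho_2)^F}{\rho_1^S(1-\rho_1)^F}\right)^{-1}$. *)

(* Defs.v *)
From Stdlib Require Import Reals.
From Coquelicot Require Import Coquelicot.
Open Scope R_scope.

(* Multinomial-logit (Gumbel, scale 1, mean 0) closed forms:
   for a menu with mean utilities v_1..v_k plus outside option (mean 0),
   E[max utility] = ln (1 + sum_i exp v_i),
   P(item j chosen) = exp v_j / (1 + sum_i exp v_i). *)

Definition VNhigh (p : R) : R := (1 - p) / p.
Definition VNlow : R := -1.

Definition U_PN (VP vN : R) : R := ln (1 + exp VP + exp vN).
Definition U_PP (VP : R) : R := ln (1 + 2 * exp VP).

Definition rho_of (VP vN : R) : R := exp vN / (1 + exp VP + exp vN).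
Definition rho1 (VP p : R) : R := rho_of VP (VNhigh p).
Definition rho2 (VP : R) : R := rho_of VP VNlow.

(* PEAR's belief p_t after S niche-successes and F failures *)
Definition posterior (VP p : R) (S F : nat) : R :=
  / (1 + (1 - p) / p *
         ((rho2 VP ^ S * (1 - rho2 VP) ^ F) /
          (rho1 VP p ^ S * (1 - rho1 VP p) ^ F))).

Definition explores (VP p : R) (S F : nat) : bool :=
  if Rle_dec p (posterior VP p S F) then true else false.

(* stay VP p rho S F n : probability, when each exploration step produces a
   niche choice with probability rho, that starting from state (S,F) the
   policy explores at the current step and at each of the next n steps. *)
Fixpoint stay (VP p rho : R) (S F : nat) (n : nat) : R :=
  match n with
  | O => if explores VP p S F then 1 else 0
  | Datatypes.S m =>
      if explores VP p S F then
        rho * stay VP p rho (Datatypes.S S) F m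
        + (1 - rho) * stay VP p rho S (Datatypes.S F) m
      else 0
  end.

Definition explore_prob (VP p vN : R) (t : nat) : R :=
  stay VP p (rho_of VP vN) 0 0 t.

Definition step_util_PEAR (VP p vN : R) (t : nat) : R :=
  explore_prob VP p vN t * U_PN VP vN
  + (1 - explore_prob VP p vN t) * U_PP VP.

Definition Util_PEAR (VP delta p : R) : R :=
  Series (fun t => delta ^ t *
     (p * step_util_PEAR VP p (VNhigh p) t
      + (1 - p) * step_util_PEAR VP p VNlow t)).

Definition Util_APP (VP delta : R) : R :=
  Series (fun t => delta ^ t * U_PP VP).

Definition rel_gain (VP delta p : R) : R :=
  (Util_PEAR VP delta p - Util_APP VP delta) / Util_APP VP delta.

(* Main.v *)
Require Import Defs.
From Stdlib Require Import Reals Lra Lia Psatz.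
From Coquelicot Require Import Coquelicot.
Open Scope R_scope.

Lemma exp_lb5 (x : R) : 0 <= x -> 1 + x + x^2/2 + x^3/6 + x^4/24 <= exp x.
Proof.
  intro Hx.
  destruct (exist_exp x) as [l Hl] eqn:E.
  assert (Hexp : exp x = l) by (unfold exp; rewrite E; reflexivity).
  rewrite Hexp.
  unfold exp_in, infinite_sum in Hl.
  assert (H := sum_incr _ 4 l Hl).
  simpl in H.
  lapply H.
  - intro H'. simpl in H'. lra.
  - intro n. apply Rmult_le_pos. left; apply Rinv_0_lt_compat, INR_fact_lt_0.
    apply pow_le; exact Hx.
Qed.

Lemma num_bound (VP : R) : 1/3 <= VP -> ln (1 + 2 * exp VP) <= VP + 1.
Proof.
  intro H.
  assert (Hy : 2713/1944 <= exp (1/3)).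
  { eapply Rle_trans; [|apply exp_lb5; lra]. simpl. lra. }
  assert (He : exp 1 = exp (1/3) ^ 3).
  { simpl. rewrite Rmult_1_r, <- !exp_plus. f_equal. lra. }
  assert (Hm : exp (1/3) <= exp VP) by (apply exp_le_3 || (destruct (Req_dec VP (1/3)); [subst; lra| left; apply exp_increasing; lra])).
  set (y := exp (1/3)) in *.
  assert (Hk : 1 <= (exp 1 - 2) * exp VP).
  { rewrite He. assert (0 <= y^3 - 2) by nra. 
    apply Rle_trans with ((y^3-2)*y); [| apply Rmult_le_compat_l; lra].
    set (a := 2713/1944) in *.
    assert (a^4 - 2*a - 1 > 0) by (unfold a; lra).
    assert (0 <= (y - a) * (y^3 + y^2*a + y*a^2 + a^3 - 2)).
    { apply Rmult_le_pos; [lra|]. assert (1 <= a) by (unfold a; lra). nra. }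
    nra. }
  rewrite <- (ln_exp (VP+1)). apply ln_le.
  - pose proof (exp_pos VP); lra.
  - rewrite exp_plus. lra.
Qed.
Lemma stay_bounds VP p rho n : 0 <= rho <= 1 -> forall S F,
  0 <= stay VP p rho S F n <= 1.
Proof.
  intro Hr. induction n as [|n IH]; intros S F; simpl.
  - destruct (explores VP p S F); lra.
  - destruct (explores VP p S F); [|lra].
    destruct (IH (Datatypes.S S) F). destruct (IH S (Datatypes.S F)). nra.
Qed.

Lemma explores_true VP p S F : 0 < p < 1 ->
  0 < rho1 VP p ^ S * (1 - rho1 VP p) ^ F ->
  rho2 VP ^ S * (1 - rho2 VP) ^ F <= rho1 VP p ^ S * (1 - rho1 VP p) ^ F ->
  explores VP p S F = true.
Proof.
  intros Hp HB HAB. unfold explores, posterior.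
  set (A := rho2 VP ^ S * (1 - rho2 VP) ^ F) in *.
  set (B := rho1 VP p ^ S * (1 - rho1 VP p) ^ F) in *.
  destruct (Rle_dec _ _) as [|n]; [reflexivity|exfalso; apply n].
  assert (HA : 0 <= A).
  { unfold A. apply Rmult_le_pos; apply pow_le; unfold rho2, rho_of;
    pose proof (exp_pos VP); pose proof (exp_pos VNlow).
    - apply Rlt_le, Rdiv_lt_0_compat; lra.
    - apply Rmult_le_reg_r with (1 + exp VP + exp VNlow); [lra|].
      rewrite Rmult_minus_distr_r. field_simplify; lra. }
  assert (Hk0 : 0 <= A / B) by (apply Rdiv_le_0_compat; lra).
  assert (Hk1 : A / B <= 1) by (apply Rmult_le_reg_r with B; [lra|]; field_simplify; lra).
  set (k := A / B) in *.
  assert (Hq : 0 <= (1 - p) / p) by (apply Rdiv_le_0_compat; lra).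
  assert (Hpk : p * (1 + (1 - p) / p * k) <= 1).
  { replace (p * (1 + (1 - p) / p * k)) with (p + (1-p) * k) by (field; lra). nra. }
  apply Rmult_le_reg_r with (1 + (1 - p) / p * k). nra.
  rewrite Rinv_l; nra.
Qed.

Lemma explores_false VP p S F : 0 < p < 1 ->
  0 < rho1 VP p ^ S * (1 - rho1 VP p) ^ F ->
  rho1 VP p ^ S * (1 - rho1 VP p) ^ F < rho2 VP ^ S * (1 - rho2 VP) ^ F ->
  explores VP p S F = false.
Proof.
  intros Hp HB HAB. unfold explores, posterior.
  set (A := rho2 VP ^ S * (1 - rho2 VP) ^ F) in *.
  set (B := rho1 VP p ^ S * (1 - rho1 VP p) ^ F) in *.
  destruct (Rle_dec _ _) as [h|]; [exfalso|reflexivity].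
  assert (Hk1 : 1 < A / B) by (apply Rmult_lt_reg_r with B; [lra|]; field_simplify; lra).
  set (k := A / B) in *.
  assert (Hq : 0 < (1 - p) / p) by (apply Rdiv_lt_0_compat; lra).
  assert (Hpk : p * (1 + (1 - p) / p * k) > 1).
  { replace (p * (1 + (1 - p) / p * k)) with (p + (1-p) * k) by (field; lra). nra. }
  assert (Hpos : 0 < 1 + (1 - p) / p * k) by nra.
  apply (Rmult_le_compat_r (1 + (1 - p) / p * k)) in h; [|lra].
  rewrite Rinv_l in h; lra.
Qed.

Lemma stay_good VP p rho N :
  (forall S, (S <= N)%nat -> explores VP p S 0 = true /\ explores VP p S 1 = false) ->
  forall n S, (S + n <= N)%nat -> stay VP p rho S 0 n = rho ^ n.
Proof.
  intros Hg n. induction n as [|n IH]; intros S HS; simpl.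
  - rewrite (proj1 (Hg S ltac:(lia))). reflexivity.
  - rewrite (proj1 (Hg S ltac:(lia))).
    rewrite IH by lia.
    assert (H0 : stay VP p rho S 1 n = 0).
    { destruct n; simpl; rewrite (proj2 (Hg S ltac:(lia))); reflexivity. }
    rewrite H0. ring.
Qed.
Lemma rho_range VP v : 0 < rho_of VP v < 1.
Proof.
  unfold rho_of. pose proof (exp_pos VP); pose proof (exp_pos v). split.
  - apply Rdiv_lt_0_compat; lra.
  - apply Rmult_lt_reg_r with (1 + exp VP + exp v); [lra|]. field_simplify; lra.
Qed.

Lemma rho_mono VP v w : v <= w -> rho_of VP v <= rho_of VP w.
Proof.
  intro h. unfold rho_of. pose proof (exp_pos VP); pose proof (exp_pos v).
  pose proof (exp_pos w).
  assert (exp v <= exp w) by (destruct h; [left; apply exp_increasing; auto| subst; lra]).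
  apply Rmult_le_reg_r with ((1 + exp VP + exp v) * (1 + exp VP + exp w)); [nra|].
  field_simplify; try lra. nra.
Qed.

Lemma one_minus_rho1 VP p : 0 < p <= 1 -> 1 - rho1 VP p <= (1 + exp VP) * p.
Proof.
  intro Hp. unfold rho1, rho_of, VNhigh.
  set (x := (1 - p) / p).
  assert (Hx : 1 / p <= exp x).
  { replace (1/p) with (1 + x) by (unfold x; field; lra). apply exp_ineq1_le. }
  pose proof (exp_pos VP); pose proof (exp_pos x).
  assert (0 < 1/p) by (apply Rdiv_lt_0_compat; lra).
  replace (1 - exp x / (1 + exp VP + exp x)) with ((1 + exp VP) / (1 + exp VP + exp x)) by (field; lra).
  apply Rmult_le_reg_r with (1 + exp VP + exp x); [lra|].
  field_simplify; try lra.
  assert (p * exp x >= 1).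
  { apply Rmult_le_compat_l with (r := p) in Hx; [|lra]. 
    replace (p * (1/p)) with 1 in Hx by (field; lra). lra. }
  nra.
Qed.

Lemma pUh_bounds VP p : 0 < p <= 1 ->
  1 - p <= p * U_PN VP (VNhigh p) <= 1 - p + p * ln (2 + exp VP).
Proof.
  intro Hp. unfold U_PN, VNhigh. set (x := (1 - p) / p).
  assert (Hpx : p * x = 1 - p) by (unfold x; field; lra).
  assert (Hx0 : 0 <= x) by (apply Rdiv_le_0_compat; lra).
  pose proof (exp_pos VP); pose proof (exp_pos x).
  assert (1 <= exp x) by (pose proof (exp_ineq1_le x); lra).
  split.
  - rewrite <- Hpx. apply Rmult_le_compat_l; [lra|].
    rewrite <- (ln_exp x) at 1. apply ln_le; lra.
  - assert (ln (1 + exp VP + exp x) <= x + ln (2 + exp VP)).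
    { rewrite <- (ln_exp x) at 2. rewrite <- ln_mult by lra. apply ln_le; [lra|].
      nra. }
    rewrite <- Hpx, <- Rmult_plus_distr_l. apply Rmult_le_compat_l; lra.
Qed.

Lemma pow_le_one r t : 0 <= r <= 1 -> 0 <= r ^ t <= 1.
Proof.
  intro Hr. induction t as [|t IH]; simpl; [lra|]. nra.
Qed.

Lemma pow_decr r S N : 0 <= r <= 1 -> (S <= N)%nat -> r ^ N <= r ^ S.
Proof.
  intros Hr HSN. replace N with (S + (N - S))%nat by lia.
  rewrite pow_add. pose proof (pow_le_one r S Hr). pose proof (pow_le_one r (N - S) Hr). nra.
Qed.

Lemma bernoulli r t : 0 <= r <= 1 -> 1 - r ^ t <= INR t * (1 - r).
Proof.
  intro Hr. induction t as [|t IH].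
  - simpl. lra.
  - rewrite S_INR. simpl. pose proof (pow_le_one r t Hr). nra.
Qed.

Definition ap VP p t := p * step_util_PEAR VP p (VNhigh p) t + (1 - p) * step_util_PEAR VP p VNlow t.
Definition a0 VP t := 1 + U_PP VP + rho2 VP ^ t * (U_PN VP VNlow - U_PP VP).

Lemma consts VP : 1/3 <= VP ->
  0 < U_PN VP VNlow < U_PP VP /\ 0 < ln (2 + exp VP).
Proof.
  intro H. unfold U_PN, U_PP, VNlow. pose proof (exp_pos VP). pose proof (exp_pos (-1)).
  assert (exp (-1) < exp VP) by (apply exp_increasing; lra).
  repeat split.
  - rewrite <- ln_1. apply ln_increasing; lra.
  - apply ln_increasing; lra.
  - rewrite <- ln_1. apply ln_increasing; lra.
Qed.

Lemma ep_range VP p v t : 0 <= explore_prob VP p v t <= 1.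
Proof. apply stay_bounds. pose proof (rho_range VP v). lra. Qed.

Lemma ap_range VP p t : 1/3 <= VP -> 0 < p < 1 ->
  0 <= ap VP p t <= 1 + ln (2 + exp VP) + 2 * U_PP VP + U_PN VP VNlow.
Proof.
  intros HV Hp. destruct (consts VP HV) as [[Hl HU] HL].
  pose proof (pUh_bounds VP p ltac:(lra)) as Hw.
  unfold ap, step_util_PEAR.
  pose proof (ep_range VP p (VNhigh p) t). pose proof (ep_range VP p VNlow t).
  set (e := explore_prob VP p (VNhigh p) t) in *.
  set (e' := explore_prob VP p VNlow t) in *.
  set (w := p * U_PN VP (VNhigh p)) in *.
  replace (p * (e * U_PN VP (VNhigh p) + (1 - e) * U_PP VP)) with (e * w + (1 - e) * p * U_PP VP) by (unfold w; ring).
  assert (0 <= e * w <= 1 + ln (2 + exp VP)) by (split; nra).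
  assert (0 <= (1 - e) * p * U_PP VP <= U_PP VP).
  { split. apply Rmult_le_pos; nra. assert (0 <= (1-e)*p <= 1) by nra. nra. }
  assert (0 <= e' * U_PN VP VNlow + (1 - e') * U_PP VP <= U_PP VP) by (split; nra).
  assert (0 <= (1 - p) * (e' * U_PN VP VNlow + (1 - e') * U_PP VP) <= U_PP VP + U_PN VP VNlow) by (split; nra).
  lra.
Qed.

Lemma a0_range VP t : 1/3 <= VP -> 0 <= a0 VP t <= 1 + U_PP VP.
Proof.
  intros HV. destruct (consts VP HV) as [[Hl HU] HL].
  pose proof (rho_range VP VNlow). unfold a0.
  pose proof (pow_le_one (rho2 VP) t ltac:(unfold rho2; lra)). nra.
Qed.

Lemma good VP p N : 1/3 <= VP -> 0 < p < 1 ->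
  (1 + exp VP) * p < rho2 VP ^ N * (1 - rho2 VP) ->
  forall S, (S <= N)%nat -> explores VP p S 0 = true /\ explores VP p S 1 = false.
Proof.
  intros HV Hp Hsmall S HS.
  pose proof (rho_range VP VNlow) as H2. pose proof (rho_range VP (VNhigh p)) as H1.
  fold (rho2 VP) in H2. fold (rho1 VP p) in H1.
  assert (H21 : rho2 VP <= rho1 VP p).
  { apply rho_mono. unfold VNlow, VNhigh. assert (0 <= (1-p)/p) by (apply Rdiv_le_0_compat; lra). lra. }
  pose proof (pow_lt (rho1 VP p) S ltac:(lra)).
  split.
  - apply explores_true; [lra| simpl; lra |]. simpl. rewrite !Rmult_1_r.
    apply pow_incr; lra.
  - apply explores_false; [lra| simpl; nra |]. simpl. rewrite !Rmult_1_r.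
    pose proof (one_minus_rho1 VP p ltac:(lra)).
    pose proof (pow_decr (rho2 VP) S N ltac:(lra) HS).
    pose proof (pow_le_one (rho1 VP p) S ltac:(lra)).
    nra.
Qed.

Lemma close VP p N t : 1/3 <= VP -> 0 < p < 1 ->
  (1 + exp VP) * p < rho2 VP ^ N * (1 - rho2 VP) -> (t <= N)%nat ->
  Rabs (ap VP p t - a0 VP t) <=
    p * (1 + ln (2 + exp VP) + INR N * (1 + exp VP) + U_PP VP).
Proof.
  intros HV Hp Hsmall Ht. destruct (consts VP HV) as [[Hl HU] HL].
  pose proof (good VP p N HV Hp Hsmall) as Hg.
  assert (Hep : forall v, explore_prob VP p v t = rho_of VP v ^ t).
  { intro v. unfold explore_prob. apply (stay_good VP p _ N Hg). lia. }
  unfold ap, a0, step_util_PEAR. rewrite !Hep. fold (rho1 VP p). fold (rho2 VP).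
  pose proof (pUh_bounds VP p ltac:(lra)) as Hw.
  pose proof (rho_range VP VNlow) as H2. pose proof (rho_range VP (VNhigh p)) as H1.
  fold (rho2 VP) in H2. fold (rho1 VP p) in H1.
  pose proof (one_minus_rho1 VP p ltac:(lra)).
  pose proof (bernoulli (rho1 VP p) t ltac:(lra)).
  pose proof (pow_le_one (rho1 VP p) t ltac:(lra)).
  pose proof (pow_le_one (rho2 VP) t ltac:(lra)).
  assert (HN : INR t <= INR N) by (apply le_INR; lia).
  pose proof (pos_INR t).
  set (y := rho1 VP p ^ t) in *. set (z := rho2 VP ^ t) in *.
  set (w := p * U_PN VP (VNhigh p)) in *.
  set (X := z * U_PN VP VNlow + (1 - z) * U_PP VP).
  assert (HX : 0 <= X <= U_PP VP) by (unfold X; split; nra).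
  replace (p * (y * U_PN VP (VNhigh p) + (1 - y) * U_PP VP) +
     (1 - p) * X -
     (1 + U_PP VP + z * (U_PN VP VNlow - U_PP VP)))
    with ((y * w - 1) + p * (1 - y) * U_PP VP - p * X) by (unfold w, X; ring).
  assert (Hy : 1 - INR N * ((1 + exp VP) * p) <= y).
  { assert (INR t * (1 - rho1 VP p) <= INR N * ((1 + exp VP) * p)).
    { apply Rmult_le_compat; lra. }
    lra. }
  assert (y * w <= w) by nra.
  assert (y * (1 - p) <= y * w) by nra.
  assert (0 <= p * (1 - y) * U_PP VP <= p * U_PP VP).
  { split. apply Rmult_le_pos; nra. assert (p * (1-y) <= p) by nra. nra. }
  assert (0 <= p * X <= p * U_PP VP) by (split; nra).
  assert (y * p <= p) by nra.
  assert (0 <= p * INR N * (1 + exp VP)) by (pose proof (pos_INR N); pose proof (exp_pos VP); apply Rmult_le_pos; nra).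
  assert (0 <= p * ln (2 + exp VP)) by nra.
  apply Rabs_le. split.
  - lra.
  - lra.
Qed.

Lemma series_bound (u : nat -> R) C q : 0 <= q < 1 ->
  (forall k, Rabs (u k) <= C * q ^ k) -> ex_series u /\ Rabs (Series u) <= C / (1 - q).
Proof.
  intros Hq Hu.
  assert (Hg : ex_series (fun k => C * q ^ k)).
  { apply (@ex_series_ext R_AbsRing R_NormedModule (fun k => q ^ k * C) (fun k => C * q ^ k)). intro; simpl; ring.
    apply ex_series_scal_r, ex_series_geom. rewrite Rabs_pos_eq; lra. }
  assert (Habs : ex_series (fun k => Rabs (u k))).
  { apply (@ex_series_le R_AbsRing R_CompleteNormedModule _ (fun k => C * q ^ k)); [|exact Hg].
    intro k. change (norm (Rabs (u k))) with (Rabs (Rabs (u k))). rewrite Rabs_Rabsolu. apply Hu. }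
  split.
  - apply (@ex_series_le R_AbsRing R_CompleteNormedModule _ (fun k => C * q ^ k)); [|exact Hg].
    intro k. change (norm (u k)) with (Rabs (u k)). apply Hu.
  - eapply Rle_trans. apply Series_Rabs; exact Habs.
    eapply Rle_trans. apply Series_le; [|exact Hg]. intro k; split; [apply Rabs_pos| apply Hu].
    rewrite Series_scal_l, Series_geom by (rewrite Rabs_pos_eq; lra). unfold Rdiv. lra.
Qed.

Lemma finsum_bound (u : nat -> R) N e :
  (forall i, (i <= N)%nat -> Rabs (u i) <= e) -> Rabs (sum_f_R0 u N) <= (INR N + 1) * e.
Proof.
  induction N as [|N IH]; intro H.
  - simpl. specialize (H 0%nat ltac:(lia)). lra.
  - simpl sum_f_R0. rewrite S_INR.
    eapply Rle_trans. apply Rabs_triang.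
    specialize (IH (fun i Hi => H i ltac:(lia))). specialize (H (S N) ltac:(lia)). lra.
Qed.

Lemma PEAR_lim VP delta eps : 1/3 <= VP -> 0 < delta < 1 -> 0 < eps ->
  exists eta, 0 < eta /\ forall p, 0 < p < eta ->
    Rabs (Util_PEAR VP delta p - Series (fun t => delta ^ t * a0 VP t)) < eps.
Proof.
  intros HV Hd He. destruct (consts VP HV) as [[Hl HU] HL].
  set (B := 1 + ln (2 + exp VP) + 2 * U_PP VP + U_PN VP VNlow).
  assert (HB : 0 < B) by (unfold B; lra).
  destruct (pow_lt_1_zero delta ltac:(rewrite Rabs_pos_eq; lra) (eps * (1 - delta) / (2 * B)))
    as [N HN].
  { apply Rdiv_lt_0_compat; nra. }
  set (c := 1 + exp VP). assert (Hc : 0 < c) by (unfold c; pose proof (exp_pos VP); lra).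
  set (K := 1 + ln (2 + exp VP) + INR N * c + U_PP VP).
  assert (HK : 0 < K) by (unfold K; pose proof (pos_INR N); nra).
  set (m := rho2 VP ^ N * (1 - rho2 VP)).
  assert (Hm : 0 < m).
  { unfold m. pose proof (rho_range VP VNlow). fold (rho2 VP) in H.
    apply Rmult_lt_0_compat; [apply pow_lt|]; lra. }
  pose proof (pos_INR N) as HNpos.
  exists (Rmin (1/2) (Rmin (m / c) (eps / (4 * ((INR N + 1) * K))))).
  split.
  { apply Rmin_pos; [lra| apply Rmin_pos; apply Rdiv_lt_0_compat; nra]. }
  intros p Hp.
  assert (Hp1 : p < 1/2) by (eapply Rlt_le_trans; [apply Hp| apply Rmin_l]).
  assert (Hp2 : p < m / c) by (eapply Rlt_le_trans; [apply Hp| eapply Rle_trans; [apply Rmin_r| apply Rmin_l]]).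
  assert (Hp3 : p < eps / (4 * ((INR N + 1) * K))) by (eapply Rlt_le_trans; [apply Hp| eapply Rle_trans; [apply Rmin_r| apply Rmin_r]]).
  assert (Hpp : 0 < p < 1) by lra.
  assert (Hsmall : c * p < m).
  { apply Rmult_lt_compat_l with (r := c) in Hp2; [|lra].
    replace (c * (m / c)) with m in Hp2 by (field; lra). lra. }
  assert (Hd' : 0 <= delta < 1) by lra.
  assert (Hdpow : forall k, 0 <= delta ^ k <= 1) by (intro; apply pow_le_one; lra).
  assert (Hdiff : forall t, Rabs (ap VP p t - a0 VP t) <= B).
  { intro t. pose proof (ap_range VP p t HV Hpp). pose proof (a0_range VP t HV).
    apply Rabs_le. unfold B in *. split; lra. }
  destruct (series_bound (fun t => delta ^ t * ap VP p t) B delta Hd') as [Ev _].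
  { intro k. pose proof (ap_range VP p k HV Hpp). pose proof (Hdpow k).
    rewrite Rabs_mult, Rabs_pos_eq, Rabs_pos_eq by lra. unfold B in *. nra. }
  destruct (series_bound (fun t => delta ^ t * a0 VP t) B delta Hd') as [Ew _].
  { intro k. pose proof (a0_range VP k HV). pose proof (Hdpow k).
    rewrite Rabs_mult, Rabs_pos_eq, Rabs_pos_eq by lra. unfold B in *. nra. }
  set (u := fun t => delta ^ t * ap VP p t - delta ^ t * a0 VP t).
  assert (Hu : forall k, Rabs (u k) <= B * delta ^ k).
  { intro k. unfold u. rewrite <- Rmult_minus_distr_l, Rabs_mult, Rabs_pos_eq by (apply Hdpow).
    pose proof (Hdiff k). pose proof (Hdpow k). nra. }
  destruct (series_bound u B delta Hd' Hu) as [Eu _].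
  change (Util_PEAR VP delta p) with (Series (fun t => delta ^ t * ap VP p t)).
  rewrite <- Series_minus by assumption. fold u.
  rewrite (Series_incr_n u (S N)) by (lia || assumption). simpl pred.
  assert (Hfin : Rabs (sum_f_R0 u N) <= (INR N + 1) * (p * K)).
  { apply finsum_bound. intros i Hi. unfold u.
    rewrite <- Rmult_minus_distr_l, Rabs_mult, Rabs_pos_eq by (apply Hdpow).
    pose proof (close VP p N i HV Hpp Hsmall Hi). fold c K in H.
    pose proof (Hdpow i). pose proof (Rabs_pos (ap VP p i - a0 VP i)).
    assert (0 <= p * K) by nra. nra. }
  destruct (series_bound (fun k => u (S N + k)%nat) (B * delta ^ (S N)) delta Hd') as [_ Htail].
  { intro k. rewrite Hu, pow_add. lra. }
  assert (HdN : delta ^ S N < eps * (1 - delta) / (2 * B)).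
  { specialize (HN (S N) ltac:(lia)). rewrite Rabs_pos_eq in HN by (apply Hdpow). exact HN. }
  assert (Ht2 : B * delta ^ S N / (1 - delta) < eps / 2).
  { apply Rmult_lt_reg_r with (1 - delta); [lra|].
    replace (B * delta ^ S N / (1 - delta) * (1 - delta)) with (B * delta ^ S N) by (field; lra).
    apply Rmult_lt_compat_l with (r := B) in HdN; [|lra].
    replace (B * (eps * (1 - delta) / (2 * B))) with (eps / 2 * (1 - delta)) in HdN by (field; lra).
    lra. }
  assert (Hf2 : (INR N + 1) * (p * K) < eps / 2).
  { apply Rmult_lt_compat_l with (r := (INR N + 1) * K) in Hp3; [|nra].
    replace ((INR N + 1) * K * (eps / (4 * ((INR N + 1) * K)))) with (eps / 4) in Hp3 by (field; lra).
    nra. }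
  eapply Rle_lt_trans. apply Rabs_triang. lra.
Qed.

Lemma S0_val VP delta : 0 < delta < 1 ->
  Series (fun t => delta ^ t * a0 VP t) =
  (1 + U_PP VP) / (1 - delta) + (U_PN VP VNlow - U_PP VP) / (1 - delta * rho2 VP).
Proof.
  intro Hd. pose proof (rho_range VP VNlow) as H2. fold (rho2 VP) in H2.
  assert (Hq1 : Rabs delta < 1) by (rewrite Rabs_pos_eq; lra).
  assert (Hq2 : Rabs (delta * rho2 VP) < 1) by (rewrite Rabs_pos_eq; nra).
  rewrite (Series_ext _ (fun t => delta ^ t * (1 + U_PP VP) + (delta * rho2 VP) ^ t * (U_PN VP VNlow - U_PP VP))).
  2: { intro t. unfold a0. rewrite Rpow_mult_distr. ring. }
  rewrite Series_plus.
  - rewrite !Series_scal_r, !Series_geom by assumption. unfold Rdiv. ring.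
  - apply ex_series_scal_r, ex_series_geom; assumption.
  - apply ex_series_scal_r, ex_series_geom; assumption.
Qed.

Lemma APP_val VP delta : 0 < delta < 1 -> Util_APP VP delta = U_PP VP / (1 - delta).
Proof.
  intro Hd. unfold Util_APP. rewrite Series_scal_r, Series_geom by (rewrite Rabs_pos_eq; lra).
  unfold Rdiv. ring.
Qed.

Theorem mainTheorem6 (VP : R) (hVP : 1 / 3 <= VP) :
  exists (L : R -> R) (M : R),
    at_left 1 (fun delta =>
      filterlim (fun p => rel_gain VP delta p) (at_right 0) (locally (L delta)))
    /\ filterlim L (at_left 1) (locally M)
    /\ 1 / (VP + 1) <= M.
Proof.
  destruct (consts VP hVP) as [[Hl HU] HL].
  pose proof (rho_range VP VNlow) as H2. fold (rho2 VP) in H2.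
  set (U := U_PP VP) in *. set (Ul := U_PN VP VNlow) in *. set (r2 := rho2 VP) in *.
  set (L := fun delta => (1 + (1 - delta) * (Ul - U) / (1 - delta * r2)) / U).
  exists L, (L 1). split; [|split].
  - exists (mkposreal 1 Rlt_0_1). intros d Hb Hd1. simpl in Hb. change (Rabs (d - 1) < 1) in Hb.
    apply Rabs_lt_between in Hb. assert (Hd : 0 < d < 1) by lra.
    apply filterlim_locally. intro eps.
    assert (HA : 0 < U / (1 - d)) by (apply Rdiv_lt_0_compat; lra).
    destruct (PEAR_lim VP d (eps * (U / (1 - d))) hVP Hd) as [eta [Heta Hp]].
    { apply Rmult_lt_0_compat; [apply cond_pos| exact HA]. }
    exists (mkposreal eta Heta). intros p Hpb Hp0. simpl in Hpb. change (Rabs (p - 0) < eta) in Hpb.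
    rewrite Rminus_0_r in Hpb. apply Rabs_lt_between in Hpb.
    specialize (Hp p ltac:(lra)).
    change (Rabs (rel_gain VP d p - L d) < eps).
    rewrite S0_val in Hp by exact Hd.
    unfold rel_gain. rewrite APP_val by exact Hd. fold U.
    assert (Hr : 0 < 1 - d * r2) by nra.
    replace ((Util_PEAR VP d p - U / (1 - d)) / (U / (1 - d)) - L d) with
      ((Util_PEAR VP d p - ((1 + U) / (1 - d) + (Ul - U) / (1 - d * r2))) / (U / (1 - d))).
    2: { unfold L. field. repeat split; lra. }
    unfold Rdiv at 1. rewrite Rabs_mult, Rabs_inv, (Rabs_pos_eq (U / (1 - d))) by lra.
    apply Rmult_lt_reg_r with (U / (1 - d)); [exact HA|].
    rewrite Rmult_assoc, Rinv_l by lra. fold U Ul r2 in Hp. lra.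
  - apply (filterlim_filter_le_1 (F := locally 1)).
    { apply filter_le_within. }
    apply (@ex_derive_continuous R_AbsRing R_NormedModule). unfold L. auto_derive. repeat split; lra.
  - unfold L. replace ((1 + (1 - 1) * (Ul - U) / (1 - 1 * r2)) / U) with (1 / U) by (field; lra).
    pose proof (num_bound VP hVP). assert (U <= VP + 1) by (unfold U, U_PP; exact H).
    unfold Rdiv. rewrite !Rmult_1_l. apply Rinv_le_contravar; lra.
Qed.
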